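(* Let $f$ be an orientation-preserving homeomorphism of the circle $\mathbb T=\mathbb R/\mathbb Z$ whose rotation number $\rho(f)$ is irrational. Assume $f$ is not topologically conjugate to a rotation. Then ${\rm h_{pol}}(f)=1$.
   Context: The rotation number of $f$ is the class in $\mathbb T$ of $\lim_{n\to\infty}F^n(x)/n$ for a lift $F:\mathbb R\to\mathbb R$ of $f$ (independent of $x$). Polynomial entropy: with $d_n^f(x,y)=\max_{0\le k\le n-1}d(f^k(x),f^k(y))$ for the standard metric $d$ on $\mathbb T$ and $G_n^f(\varepsilon)$ the minimal number of $d_n^f$-balls of radius $\varepsilon$ covering $\mathbb T$, ${\rm h_{pol}}(f)=\lim_{\varepsilon\to0}\limsup_{n\to\infty}\frac{\log G_n^f(\varepsilon)}{\log n}$. *)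

(* Defs.v *)
From Stdlib Require Import Reals Lra List ClassicalEpsilon.
From Coquelicot Require Import Coquelicot.
Open Scope R_scope.

(* The circle T = R/Z: points are represented by real numbers (mod 1).
   Standard metric on T: distance to the nearest integer of x - y. *)
Definition dT (x y : R) : R :=
  Rmin (frac_part (x - y)) (1 - frac_part (x - y)).

Definition op_circle_homeo_lift (F : R -> R) : Prop :=
  (forall x, continuity_pt F x) /\
  (forall x y, x < y -> F x < F y) /\
  (forall x, F (x + 1) = F x + 1).

Definition circle_homeo_lift (H : R -> R) : Prop :=
  (forall x, continuity_pt H x) /\
  (((forall x y, x < y -> H x < H y) /\ (forall x, H (x + 1) = H x + 1)) \/
   ((forall x y, x < y -> H y < H x) /\ (forall x, H (x + 1) = H x - 1))).

(* The circle map f (with lift F) is topologically conjugate to a rotation: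
   there is a homeomorphism h of T (lift H) and alpha with h o f = R_alpha o h on T. *)
Definition conj_to_rotation (F : R -> R) : Prop :=
  exists (H : R -> R) (alpha : R), circle_homeo_lift H /\
    forall x, exists k : Z, H (F x) = H x + alpha + IZR k.

Fixpoint dn (F : R -> R) (n : nat) (x y : R) : R :=
  match n with
  | O => 0
  | S m => Rmax (dn F m x y) (dT (Nat.iter m F x) (Nat.iter m F y))
  end.

Definition covers (F : R -> R) (n : nat) (eps : R) (N : nat) : Prop :=
  exists l : list R, length l = N /\
    forall x : R, exists c, In c l /\ dn F n x c < eps.

Definition Gn (F : R -> R) (n : nat) (eps : R) : nat :=
  epsilon (inhabits 0%nat)
    (fun N => covers F n eps N /\ forall M, covers F n eps M -> (N <= M)%nat).

Definition hpol_eps (F : R -> R) (eps : R) : Rbar :=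
  LimSup_seq (fun n => ln (INR (Gn F n eps)) / ln (INR n)).

Definition hpol_eq (F : R -> R) (l : R) : Prop :=
  forall delta, 0 < delta -> exists eps0, 0 < eps0 /\
    forall eps, 0 < eps < eps0 ->
      exists r, hpol_eps F eps = Finite r /\ Rabs (r - l) < delta.

(* Main.v *)
Require Import Defs.
From Stdlib Require Import Reals.
From Stdlib Require Import Lra Lia List ZArith ClassicalEpsilon Classical.
From Coquelicot Require Import Coquelicot.
Open Scope R_scope.

Lemma Int_part_unique z r : IZR z <= r < IZR z + 1 -> Int_part r = z.
Proof.
  intros [H1 H2]. destruct (base_Int_part r) as [B1 B2].
  assert (A1 : (z < Int_part r + 1)%Z).
  { apply lt_IZR. rewrite plus_IZR. simpl. lra. }
  assert (A2 : (Int_part r < z + 1)%Z).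
  { apply lt_IZR. rewrite plus_IZR. simpl. lra. }
  lia.
Qed.

Lemma Int_part_bnd r : IZR (Int_part r) <= r < IZR (Int_part r) + 1.
Proof. destruct (base_Int_part r). lra. Qed.

Lemma Int_part_shift r m : Int_part (r + IZR m) = (Int_part r + m)%Z.
Proof.
  apply Int_part_unique. rewrite plus_IZR. pose proof (Int_part_bnd r). lra.
Qed.

Lemma Int_part_mono x y : x <= y -> (Int_part x <= Int_part y)%Z.
Proof.
  intros H. pose proof (Int_part_bnd x). pose proof (Int_part_bnd y).
  assert (Int_part x < Int_part y + 1)%Z.
  { apply lt_IZR. rewrite plus_IZR. simpl. lra. }
  lia.
Qed.

Lemma frac_shift r m : frac_part (r + IZR m) = frac_part r.
Proof. unfold frac_part. rewrite Int_part_shift, plus_IZR. ring. Qed.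

Lemma frac_range r : 0 <= frac_part r < 1.
Proof. unfold frac_part. pose proof (Int_part_bnd r). lra. Qed.

Lemma dT_shift a b m : dT (a + IZR m) b = dT a b.
Proof. unfold dT. replace (a + IZR m - b) with ((a - b) + IZR m) by ring. now rewrite frac_shift. Qed.

Lemma dT_le_abs a b : dT a b <= Rabs (a - b).
Proof.
  unfold dT. pose proof (frac_range (a - b)).
  destruct (Rle_or_lt 1 (Rabs (a - b))).
  - apply Rle_trans with (frac_part (a-b)). apply Rmin_l. lra.
  - destruct (Rle_or_lt 0 (a - b)).
    + assert (Int_part (a - b) = 0%Z) by (apply Int_part_unique; simpl; rewrite Rabs_right in H0; lra).
      unfold frac_part at 1. rewrite H2. simpl. rewrite Rabs_right by lra.
      apply Rle_trans with (a - b - 0). apply Rmin_l. lra.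
    + assert (Int_part (a - b) = (-1)%Z) by (apply Int_part_unique; simpl; rewrite Rabs_left in H0; lra).
      unfold frac_part at 2. rewrite H2. rewrite Rabs_left by lra.
      apply Rle_trans with (1 - (a - b - IZR (-1))). apply Rmin_r. simpl. lra.
Qed.

Lemma dT_lt_inv a b eps : dT a b < eps -> exists j, Rabs (a - b - IZR j) < eps.
Proof.
  unfold dT. intros H. pose proof (Int_part_bnd (a - b)). unfold frac_part in *.
  destruct (Rle_or_lt (a - b - IZR (Int_part (a - b))) (1 - (a - b - IZR (Int_part (a - b))))).
  - rewrite Rmin_left in H by lra. exists (Int_part (a - b)). rewrite Rabs_right; lra.
  - rewrite Rmin_right in H by lra. exists (Int_part (a - b) + 1)%Z. rewrite plus_IZR.
    rewrite Rabs_left; simpl; lra.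
Qed.

Lemma F_shift_nat F : op_circle_homeo_lift F -> forall x n, F (x + INR n) = F x + INR n.
Proof.
  intros [_ [_ HF]] x n. induction n.
  - simpl. now rewrite !Rplus_0_r.
  - rewrite S_INR. replace (x + (INR n + 1)) with ((x + INR n) + 1) by ring.
    rewrite HF, IHn. ring.
Qed.

Lemma F_shift F : op_circle_homeo_lift F -> forall x m, F (x + IZR m) = F x + IZR m.
Proof.
  intros HF x m. destruct (Z.le_gt_cases 0 m).
  - rewrite <- (Z2Nat.id m) by lia. rewrite <- INR_IZR_INZ. now apply F_shift_nat.
  - replace m with (- Z.of_nat (Z.to_nat (- m)))%Z by lia.
    rewrite opp_IZR, <- INR_IZR_INZ. set (n := Z.to_nat (-m)).
    pose proof (F_shift_nat F HF (x - INR n) n) as E. replace (x - INR n + INR n) with x in E by ring.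
    replace (x + - INR n) with (x - INR n) by ring. lra.
Qed.

Lemma iter_shift F : op_circle_homeo_lift F -> forall k x m,
  Nat.iter k F (x + IZR m) = Nat.iter k F x + IZR m.
Proof.
  intros HF k. induction k; intros x m; simpl. reflexivity. rewrite IHk. now apply F_shift.
Qed.

Lemma iter_lt F : op_circle_homeo_lift F -> forall k x y, x < y -> Nat.iter k F x < Nat.iter k F y.
Proof.
  intros HF k. induction k; intros x y H; simpl. exact H. apply HF. now apply IHk.
Qed.

Lemma iter_le F : op_circle_homeo_lift F -> forall k x y, x <= y -> Nat.iter k F x <= Nat.iter k F y.
Proof.
  intros HF k x y [H|H]. left; now apply iter_lt. subst; lra.
Qed.

Lemma iter_lt_inv F : op_circle_homeo_lift F -> forall k x y, Nat.iter k F x < Nat.iter k F y -> x < y.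
Proof.
  intros HF k x y H. destruct (Rlt_or_le x y) as [h|h]; auto.
  pose proof (iter_le F HF k y x h). lra.
Qed.

Lemma iter_le_inv F : op_circle_homeo_lift F -> forall k x y, Nat.iter k F x <= Nat.iter k F y -> x <= y.
Proof.
  intros HF k x y H. destruct (Rle_or_lt x y) as [h|h]; auto.
  pose proof (iter_lt F HF k y x h). lra.
Qed.

Lemma F_surj F : op_circle_homeo_lift F -> forall w, exists z, F z = w.
Proof.
  intros HF w. pose (a := IZR (Int_part (w - F 0))). pose proof (Int_part_bnd (w - F 0)).
  assert (Fa : F a = F 0 + a) by (unfold a; rewrite <- (Rplus_0_l (IZR _)) at 1; now rewrite F_shift).
  assert (Fb : F (a + 1) = F 0 + a + 1) by (destruct HF as [_ [_ H1]]; rewrite H1; lra).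
  destruct (Req_dec (F a) w). eauto.
  destruct (IVT (fun t => F t - w) a (a + 1)) as [z [_ Hz]].
  - intro t. apply continuity_pt_minus. apply HF. apply continuity_pt_const. intros u v; reflexivity.
  - lra.
  - unfold a in *. lra.
  - unfold a in *. lra.
  - exists z. lra.
Qed.

Lemma iter_surj F : op_circle_homeo_lift F -> forall k w, exists z, Nat.iter k F z = w.
Proof.
  intros HF k. induction k; intros w. exists w; reflexivity.
  destruct (F_surj F HF w) as [u Hu]. destruct (IHk u) as [z Hz]. exists z. simpl. now rewrite Hz.
Qed.

Lemma iter_diff F : op_circle_homeo_lift F -> forall k x,
  x - 1 <= Nat.iter k F x - Nat.iter k F 0 <= x + 1.
Proof.
  intros HF k x. pose proof (Int_part_bnd x) as [H1 H2].
  pose proof (iter_le F HF k (0 + IZR (Int_part x)) x ltac:(lra)).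
  pose proof (iter_le F HF k x (0 + IZR (Int_part x + 1)) ltac:(rewrite plus_IZR; simpl; lra)).
  rewrite iter_shift in H, H0 by auto. rewrite plus_IZR in H0. simpl in H0. lra.
Qed.

Lemma lim_inv_S : is_lim_seq (fun k => / INR (S k)) 0.
Proof.
  apply (proj1 (is_lim_seq_incr_1 (fun n => / INR n) 0)).
  pose proof (is_lim_seq_inv INR p_infty is_lim_seq_INR ltac:(discriminate)).
  simpl in H. exact H.
Qed.

Lemma lim_pq (a b : R) : is_lim_seq (fun k => a - b * / INR (S k)) a.
Proof.
  replace (Finite a) with (Finite (a - b * 0)) by (f_equal; ring).
  apply is_lim_seq_minus'. apply is_lim_seq_const.
  pose proof (is_lim_seq_scal_l _ b _ lim_inv_S) as H. simpl in H. rewrite Rmult_0_r in H |- *. exact H.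
Qed.

Lemma subseq_ev q : (1 <= q)%nat -> filterlim (fun k => (S k * q)%nat) eventually eventually.
Proof.
  intros Hq P [N HN]. exists N. intros n Hn. apply HN. nia.
Qed.

Lemma iter_mult_ge F : op_circle_homeo_lift F -> forall q x0 p,
  Nat.iter q F x0 >= x0 + IZR p ->
  forall k, Nat.iter (k * q) F x0 >= x0 + IZR (Z.of_nat k * p).
Proof.
  intros HF q x0 p H k. induction k.
  - simpl. lra.
  - replace (S k * q)%nat with (q + k * q)%nat by lia. rewrite Nat.iter_add.
    pose proof (iter_le F HF q (x0 + IZR (Z.of_nat k * p)) _ (Rge_le _ _ IHk)).
    rewrite iter_shift in H0 by auto.
    replace (Z.of_nat (S k) * p)%Z with (Z.of_nat k * p + p)%Z by lia. rewrite plus_IZR. lra.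
Qed.

Lemma iter_mult_le F : op_circle_homeo_lift F -> forall q x0 p,
  Nat.iter q F x0 <= x0 + IZR p ->
  forall k, Nat.iter (k * q) F x0 <= x0 + IZR (Z.of_nat k * p).
Proof.
  intros HF q x0 p H k. induction k.
  - simpl. lra.
  - replace (S k * q)%nat with (q + k * q)%nat by lia. rewrite Nat.iter_add.
    pose proof (iter_le F HF q _ (x0 + IZR (Z.of_nat k * p)) IHk).
    rewrite iter_shift in H0 by auto.
    replace (Z.of_nat (S k) * p)%Z with (Z.of_nat k * p + p)%Z by lia. rewrite plus_IZR. lra.
Qed.

Lemma rho_ge F (rho : R) : op_circle_homeo_lift F ->
  is_lim_seq (fun n => Nat.iter n F 0 / INR n) rho ->
  forall q x0 p, (1 <= q)%nat -> Nat.iter q F x0 >= x0 + IZR p -> INR q * rho >= IZR p.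
Proof.
  intros HF Hl q x0 p Hq H.
  pose proof (is_lim_seq_subseq _ _ _ (subseq_ev q Hq) Hl) as Hs. simpl in Hs.
  assert (Hq' : 0 < INR q) by (apply lt_0_INR; lia).
  assert (Hle : forall k, IZR p / INR q - (1 + Rabs x0) / INR q * / INR (S k) <=
                 Nat.iter (S k * q) F 0 / INR (S k * q)).
  { intros k. pose proof (iter_mult_ge F HF q x0 p H (S k)).
    pose proof (iter_diff F HF (S k * q) x0).
    rewrite mult_IZR, <- INR_IZR_INZ in H0. rewrite mult_INR.
    assert (0 < INR (S k)) by (apply lt_0_INR; lia).
    pose proof (Rle_abs x0). pose proof (Rle_abs (-x0)). rewrite Rabs_Ropp in H4.
    unfold Rdiv. apply Rmult_le_reg_r with (INR (S k) * INR q). nra.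
    field_simplify; try lra. }
  pose proof (is_lim_seq_le _ _ _ _ Hle (lim_pq _ _) Hs). simpl in H0.
  apply Rle_ge. apply Rmult_le_reg_r with (/ INR q). apply Rinv_0_lt_compat; lra.
  replace (INR q * rho * / INR q) with rho by (field; lra). exact H0.
Qed.

Lemma rho_le F (rho : R) : op_circle_homeo_lift F ->
  is_lim_seq (fun n => Nat.iter n F 0 / INR n) rho ->
  forall q x0 p, (1 <= q)%nat -> Nat.iter q F x0 <= x0 + IZR p -> INR q * rho <= IZR p.
Proof.
  intros HF Hl q x0 p Hq H.
  pose proof (is_lim_seq_subseq _ _ _ (subseq_ev q Hq) Hl) as Hs. simpl in Hs.
  assert (Hq' : 0 < INR q) by (apply lt_0_INR; lia).
  assert (Hle : forall k, Nat.iter (S k * q) F 0 / INR (S k * q) <=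
                 IZR p / INR q - (- (1 + Rabs x0)) / INR q * / INR (S k)).
  { intros k. pose proof (iter_mult_le F HF q x0 p H (S k)).
    pose proof (iter_diff F HF (S k * q) x0).
    rewrite mult_IZR, <- INR_IZR_INZ in H0. rewrite mult_INR.
    assert (0 < INR (S k)) by (apply lt_0_INR; lia).
    pose proof (Rle_abs x0). pose proof (Rle_abs (-x0)). rewrite Rabs_Ropp in H4.
    unfold Rdiv. apply Rmult_le_reg_r with (INR (S k) * INR q). nra.
    field_simplify; try lra. }
  pose proof (is_lim_seq_le _ _ _ _ Hle Hs (lim_pq _ _)). simpl in H0.
  apply Rmult_le_reg_r with (/ INR q). apply Rinv_0_lt_compat; lra.
  replace (INR q * rho * / INR q) with rho by (field; lra). exact H0.
Qed.

Definition irr (rho : R) := ~ exists p q : Z, q <> 0%Z /\ rho = IZR p / IZR q.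

Lemma irr_lin rho : irr rho -> forall (n : nat) (m : Z), (1 <= n)%nat -> INR n * rho <> IZR m.
Proof.
  intros Hi n m Hn E. apply Hi. exists m, (Z.of_nat n). split. lia.
  rewrite <- INR_IZR_INZ. assert (0 < INR n) by (apply lt_0_INR; lia).
  rewrite <- E. field. lra.
Qed.

Lemma irr_eq rho : irr rho -> forall n n' m m',
  INR n * rho + IZR m = INR n' * rho + IZR m' -> n = n' /\ m = m'.
Proof.
  intros Hi n n' m m' E. destruct (Nat.lt_total n n') as [h|[h|h]].
  - exfalso. apply (irr_lin rho Hi (n' - n) (m - m')). lia.
    rewrite minus_INR by lia. rewrite minus_IZR. lra.
  - subst. split; auto. apply eq_IZR. lra.
  - exfalso. apply (irr_lin rho Hi (n - n') (m' - m)). lia.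
    rewrite minus_INR by lia. rewrite minus_IZR. lra.
Qed.

Section Rot.
Variable F : R -> R.
Variable rho : R.
Hypothesis HF : op_circle_homeo_lift F.
Hypothesis Hl : is_lim_seq (fun n => Nat.iter n F 0 / INR n) rho.
Hypothesis Hi : irr rho.

Lemma key q x p : (1 <= q)%nat ->
  (Nat.iter q F x < x + IZR p /\ INR q * rho < IZR p) \/
  (Nat.iter q F x > x + IZR p /\ INR q * rho > IZR p).
Proof.
  intros Hq. pose proof (irr_lin rho Hi q p Hq).
  destruct (Rtotal_order (Nat.iter q F x) (x + IZR p)) as [h|[h|h]].
  - left. split; auto. pose proof (rho_le F rho HF Hl q x p Hq ltac:(lra)). lra.
  - exfalso. pose proof (rho_le F rho HF Hl q x p Hq ltac:(lra)).
    pose proof (rho_ge F rho HF Hl q x p Hq ltac:(lra)). lra.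
  - right. split; auto. pose proof (rho_ge F rho HF Hl q x p Hq ltac:(lra)). lra.
Qed.

Lemma order_C n n' m m' : INR n * rho + IZR m < INR n' * rho + IZR m' ->
  Nat.iter n F 0 + IZR m < Nat.iter n' F 0 + IZR m'.
Proof.
  intros H. destruct (le_lt_dec n' n) as [h|h].
  - replace n with ((n - n') + n')%nat in * by lia. rewrite Nat.iter_add.
    set (y := Nat.iter n' F 0). set (d := (n - n')%nat) in *.
    destruct (Nat.eq_dec d 0) as [e|e].
    + rewrite e in *. simpl in *. assert (IZR m < IZR m') by lra. lra.
    + rewrite plus_INR in H. destruct (key d y (m' - m) ltac:(lia)) as [[A B]|[A B]];
      rewrite minus_IZR in *; lra.
  - replace n' with ((n' - n) + n)%nat in * by lia. rewrite Nat.iter_add.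
    set (z := Nat.iter n F 0). set (d := (n' - n)%nat) in *.
    rewrite plus_INR in H. destruct (key d z (m - m') ltac:(lia)) as [[A B]|[A B]];
      rewrite minus_IZR in *; lra.
Qed.

Lemma order_B n n' m m' : Nat.iter n F 0 + IZR m < Nat.iter n' F 0 + IZR m' ->
  INR n * rho + IZR m < INR n' * rho + IZR m'.
Proof.
  intros H. destruct (Rtotal_order (INR n * rho + IZR m) (INR n' * rho + IZR m')) as [h|[h|h]]; auto.
  - destruct (irr_eq rho Hi _ _ _ _ h). subst. lra.
  - pose proof (order_C _ _ _ _ h). lra.
Qed.

Lemma order_A n n' m m' : Nat.iter n F 0 + IZR m <= Nat.iter n' F 0 + IZR m' ->
  INR n * rho + IZR m <= INR n' * rho + IZR m'.
Proof.
  intros H. destruct (Rle_or_lt (INR n * rho + IZR m) (INR n' * rho + IZR m')) as [h|h]; auto.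
  pose proof (order_C _ _ _ _ h). lra.
Qed.

End Rot.

Lemma small_elt rho : irr rho -> forall eps, 0 < eps ->
  exists n m : Z, 0 < IZR n * rho + IZR m < eps.
Proof.
  intros Hi eps He. apply NNPP. intro Hn.
  assert (Hge : forall n m : Z, 0 < IZR n * rho + IZR m -> eps <= IZR n * rho + IZR m).
  { intros n m h. destruct (Rlt_or_le (IZR n * rho + IZR m) eps); auto. exfalso; apply Hn; eauto. }
  set (E := fun r => exists n m : Z, r = - (IZR n * rho + IZR m) /\ 0 < IZR n * rho + IZR m).
  assert (Eb : bound E). { exists (- eps). intros r [n [m [-> h]]]. pose proof (Hge n m h). lra. }
  assert (Ene : exists r, E r). { exists (-1). exists 0%Z, 1%Z. simpl. split. ring. lra. }
  destruct (completeness E Eb Ene) as [L [HL1 HL2]].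
  set (a := - L).
  assert (Alow : forall n m : Z, 0 < IZR n * rho + IZR m -> a <= IZR n * rho + IZR m).
  { intros n m h. assert (E (- (IZR n * rho + IZR m))) by (exists n, m; auto).
    pose proof (HL1 _ H). unfold a. lra. }
  assert (Agreat : forall b, (forall n m : Z, 0 < IZR n * rho + IZR m -> b <= IZR n * rho + IZR m) -> b <= a).
  { intros b hb. assert (L <= - b). { apply HL2. intros r [n [m [-> h]]]. pose proof (hb n m h). lra. }
    unfold a. lra. }
  assert (Apos : eps <= a) by (apply Agreat; auto).
  assert (Hatt : exists n0 m0 : Z, a = IZR n0 * rho + IZR m0).
  { apply NNPP. intro Hna.
    assert (Hg1 : exists n1 m1 : Z, 0 < IZR n1 * rho + IZR m1 < 2 * a).
    { apply NNPP. intro h. assert (2 * a <= a). { apply Agreat. intros n m hp.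
        destruct (Rlt_or_le (IZR n * rho + IZR m) (2 * a)); auto. exfalso; apply h; eauto. } lra. }
    destruct Hg1 as [n1 [m1 [g1a g1b]]].
    assert (a < IZR n1 * rho + IZR m1).
    { pose proof (Alow n1 m1 g1a). destruct H; auto. exfalso; apply Hna; eauto. }
    assert (Hg2 : exists n2 m2 : Z, 0 < IZR n2 * rho + IZR m2 < IZR n1 * rho + IZR m1).
    { apply NNPP. intro h. assert (IZR n1 * rho + IZR m1 <= a). { apply Agreat. intros n m hp.
        destruct (Rlt_or_le (IZR n * rho + IZR m) (IZR n1 * rho + IZR m1)); auto. exfalso; apply h; eauto. } lra. }
    destruct Hg2 as [n2 [m2 [g2a g2b]]]. pose proof (Alow n2 m2 g2a).
    assert (0 < IZR (n1 - n2) * rho + IZR (m1 - m2)) by (rewrite !minus_IZR; lra).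
    pose proof (Alow _ _ H1). rewrite !minus_IZR in H2. lra. }
  destruct Hatt as [n0 [m0 Ha]].
  set (k := Int_part (1 / a)). pose proof (Int_part_bnd (1 / a)) as Hk. fold k in Hk.
  assert (Hk2 : IZR k * a <= 1 < IZR k * a + a).
  { split. apply Rmult_le_reg_r with (/ a). apply Rinv_0_lt_compat; lra.
    replace (IZR k * a * / a) with (IZR k) by (field; lra). unfold Rdiv in Hk. lra.
    apply Rmult_lt_reg_r with (/ a). apply Rinv_0_lt_compat; lra.
    replace ((IZR k * a + a) * / a) with (IZR k + 1) by (field; lra). unfold Rdiv in Hk. lra. }
  assert (Hka : IZR k * a = 1).
  { destruct (Req_dec (IZR k * a) 1) as [e|e]; auto. exfalso.
    assert (0 < IZR (- k * n0) * rho + IZR (1 - k * m0)).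
    { rewrite mult_IZR, minus_IZR, mult_IZR, opp_IZR. simpl.
      replace (- IZR k * IZR n0 * rho + (1 - IZR k * IZR m0)) with (1 - IZR k * a) by (rewrite Ha; ring). lra. }
    pose proof (Alow _ _ H).
    rewrite mult_IZR, minus_IZR, mult_IZR, opp_IZR in H0. simpl in H0.
    replace (- IZR k * IZR n0 * rho + (1 - IZR k * IZR m0)) with (1 - IZR k * a) in H0 by (rewrite Ha; ring). lra. }
  set (k' := Int_part (rho / a)). pose proof (Int_part_bnd (rho / a)) as Hk'. fold k' in Hk'.
  assert (Hk3 : IZR k' * a <= rho < IZR k' * a + a).
  { split. apply Rmult_le_reg_r with (/ a). apply Rinv_0_lt_compat; lra.
    replace (IZR k' * a * / a) with (IZR k') by (field; lra). unfold Rdiv in Hk'. lra.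
    apply Rmult_lt_reg_r with (/ a). apply Rinv_0_lt_compat; lra.
    replace ((IZR k' * a + a) * / a) with (IZR k' + 1) by (field; lra). unfold Rdiv in Hk'. lra. }
  assert (Hka' : IZR k' * a = rho).
  { destruct (Req_dec (IZR k' * a) rho) as [e|e]; auto. exfalso.
    assert (0 < IZR (1 - k' * n0) * rho + IZR (- (k' * m0))).
    { rewrite minus_IZR, opp_IZR, !mult_IZR. simpl.
      replace ((1 - IZR k' * IZR n0) * rho + - (IZR k' * IZR m0)) with (rho - IZR k' * a) by (rewrite Ha; ring). lra. }
    pose proof (Alow _ _ H).
    rewrite minus_IZR, opp_IZR, !mult_IZR in H0. simpl in H0.
    replace ((1 - IZR k' * IZR n0) * rho + - (IZR k' * IZR m0)) with (rho - IZR k' * a) in H0 by (rewrite Ha; ring). lra. }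
  apply Hi. exists k', k. split.
  - intro e. rewrite e in Hka. simpl in Hka. lra.
  - assert (IZR k <> 0) by (intro e; rewrite e in Hka; lra).
    assert (a = / IZR k) as Ea by (apply Rmult_eq_reg_l with (IZR k); auto; rewrite Hka; field; auto). rewrite <- Hka', Ea. field. auto.
Qed.

Lemma dense rho : irr rho -> forall t eps, 0 < eps ->
  exists (n : nat) (m : Z), t < INR n * rho + IZR m < t + eps.
Proof.
  intros Hi t eps He. destruct (small_elt rho Hi (eps / 2) ltac:(lra)) as [n [m [g1 g2]]].
  set (g := IZR n * rho + IZR m) in *. set (s := t + eps / 4).
  assert (HH : exists (n' : nat) (m' : Z), s <= INR n' * rho + IZR m' <= s + g).
  { destruct (Z.le_gt_cases 0 n) as [hn|hn].
    - set (s' := s - IZR (Int_part s)). pose proof (Int_part_bnd s).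
      set (k := up (s' / g)). destruct (archimed (s' / g)) as [a1 a2]. fold k in a1, a2.
      assert (0 <= s' / g) by (unfold Rdiv; apply Rmult_le_pos; [unfold s'; lra | left; apply Rinv_0_lt_compat; lra]).
      assert (kp : (0 < k)%Z) by (apply lt_IZR; simpl; lra).
      assert (E1 : IZR k * g > s') by (apply Rmult_lt_reg_r with (/ g); [apply Rinv_0_lt_compat; lra|];
          replace (IZR k * g * / g) with (IZR k) by (field; lra); unfold Rdiv in a1; lra).
      assert (E2 : IZR k * g <= s' + g) by (apply Rmult_le_reg_r with (/ g); [apply Rinv_0_lt_compat; lra|];
          replace (IZR k * g * / g) with (IZR k) by (field; lra);
          replace ((s' + g) * / g) with (s' / g + 1) by (field; lra); lra).
      exists (Z.to_nat (k * n)), (k * m + Int_part s)%Z.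
      rewrite INR_IZR_INZ, Z2Nat.id by lia. rewrite plus_IZR, !mult_IZR.
      replace (IZR k * IZR n * rho + (IZR k * IZR m + IZR (Int_part s))) with (IZR k * g + IZR (Int_part s))
        by (unfold g; ring). unfold s' in *. lra.
    - set (T := IZR (Int_part s) + 1 - s). pose proof (Int_part_bnd s).
      assert (0 < T) by (unfold T; lra).
      destruct (archimed (T / g)) as [a1 a2]. set (k := (up (T / g) - 1)%Z).
      assert (0 < T / g) by (unfold Rdiv; apply Rmult_lt_0_compat; [lra | apply Rinv_0_lt_compat; lra]).
      assert (kp : (0 <= k)%Z) by (unfold k; assert (0 < up (T / g))%Z by (apply lt_IZR; simpl; lra); lia).
      assert (ek : IZR k = IZR (up (T / g)) - 1) by (unfold k; rewrite minus_IZR; reflexivity).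
      assert (E1 : IZR k * g <= T) by (apply Rmult_le_reg_r with (/ g); [apply Rinv_0_lt_compat; lra|];
          replace (IZR k * g * / g) with (IZR k) by (field; lra); unfold Rdiv in a2; lra).
      assert (E2 : IZR k * g > T - g) by (apply Rmult_lt_reg_r with (/ g); [apply Rinv_0_lt_compat; lra|];
          replace (IZR k * g * / g) with (IZR k) by (field; lra);
          replace ((T - g) * / g) with (T / g - 1) by (field; lra); lra).
      exists (Z.to_nat (k * - n)), (- (k * m) + Int_part s + 1)%Z.
      rewrite INR_IZR_INZ, Z2Nat.id by lia. rewrite !plus_IZR, opp_IZR, !mult_IZR, opp_IZR.
      replace (IZR k * - IZR n * rho + (- (IZR k * IZR m) + IZR (Int_part s) + 1))
        with (IZR (Int_part s) + 1 - IZR k * g) by (unfold g; ring). unfold T in *. lra. }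
  destruct HH as [n' [m' Hb]]. exists n', m'. unfold s in Hb. lra.
Qed.

Definition Eset (F : R -> R) (rho x r : R) : Prop :=
  exists (n : nat) (m : Z), r = INR n * rho + IZR m /\ Nat.iter n F 0 + IZR m <= x.

Definition Hf (F : R -> R) (rho x : R) : R := epsilon (inhabits 0) (fun L => is_lub (Eset F rho x) L).

Section Conj.
Variable F : R -> R.
Variable rho : R.
Hypothesis HF : op_circle_homeo_lift F.
Hypothesis Hl : is_lim_seq (fun n => Nat.iter n F 0 / INR n) rho.
Hypothesis Hi : irr rho.

Lemma H_lub x : is_lub (Eset F rho x) (Hf F rho x).
Proof.
  unfold Hf. apply epsilon_spec.
  assert (Eb : bound (Eset F rho x)).
  { exists (IZR (Int_part x) + 1). intros r [n [m [-> h]]].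
    pose proof (Int_part_bnd x).
    assert (Nat.iter n F 0 + IZR m < Nat.iter 0 F 0 + IZR (Int_part x + 1)) by (rewrite plus_IZR; simpl; lra).
    pose proof (order_B F rho HF Hl Hi _ _ _ _ H0). rewrite plus_IZR in H1. simpl in H1. lra. }
  assert (Ene : exists r, Eset F rho x r).
  { exists (IZR (Int_part x)). exists 0%nat, (Int_part x). split. simpl; ring.
    pose proof (Int_part_bnd x). simpl. lra. }
  destruct (completeness _ Eb Ene) as [L HL]. eauto.
Qed.

Lemma H1 x n m : Nat.iter n F 0 + IZR m <= x -> INR n * rho + IZR m <= Hf F rho x.
Proof. intros h. apply (proj1 (H_lub x)). exists n, m. auto. Qed.

Lemma H2 x b : (forall n m, Nat.iter n F 0 + IZR m <= x -> INR n * rho + IZR m <= b) -> Hf F rho x <= b.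
Proof. intros h. apply (proj2 (H_lub x)). intros r [n [m [-> h']]]. auto. Qed.

Lemma H_mono x y : x <= y -> Hf F rho x <= Hf F rho y.
Proof. intros h. apply H2. intros n m h'. apply H1. lra. Qed.

Lemma H_shift x j : Hf F rho (x + IZR j) = Hf F rho x + IZR j.
Proof.
  apply Rle_antisym.
  - assert (Hf F rho (x + IZR j) - IZR j <= Hf F rho x); [|lra].
    assert (Hf F rho (x + IZR j) <= Hf F rho x + IZR j); [|lra].
    apply H2. intros n m h. assert (INR n * rho + IZR (m - j) <= Hf F rho x); [|rewrite minus_IZR in H; lra].
    apply H1. rewrite minus_IZR. lra.
  - assert (Hf F rho x <= Hf F rho (x + IZR j) - IZR j); [|lra].
    apply H2. intros n m h. assert (INR n * rho + IZR (m + j) <= Hf F rho (x + IZR j)); [|rewrite plus_IZR in H; lra].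
    apply H1. rewrite plus_IZR. lra.
Qed.

Lemma H_F x : Hf F rho (F x) = Hf F rho x + rho.
Proof.
  apply Rle_antisym.
  - apply H2. intros n m h. apply NNPP. intro hc.
    destruct (dense rho Hi (Hf F rho x) (INR n * rho + IZR m - rho - Hf F rho x) ltac:(lra)) as [n' [m' [d1 d2]]].
    assert (hx : x < Nat.iter n' F 0 + IZR m').
    { destruct (Rlt_or_le x (Nat.iter n' F 0 + IZR m')); auto. pose proof (H1 _ _ _ H). lra. }
    assert (F x < Nat.iter (S n') F 0 + IZR m').
    { simpl. rewrite <- F_shift by auto. now apply HF. }
    assert (Nat.iter n F 0 + IZR m < Nat.iter (S n') F 0 + IZR m') by lra.
    pose proof (order_B F rho HF Hl Hi _ _ _ _ H0). rewrite S_INR in H3. lra.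
  - assert (Hf F rho x <= Hf F rho (F x) - rho); [|lra].
    apply H2. intros n m h. assert (INR (S n) * rho + IZR m <= Hf F rho (F x)); [|rewrite S_INR in H; lra].
    apply H1. simpl. rewrite <- F_shift by auto. destruct h as [h|h]. left; now apply HF. rewrite h; lra.
Qed.

Lemma H_iter d u : Hf F rho (Nat.iter d F u) = Hf F rho u + INR d * rho.
Proof.
  induction d. simpl; ring. simpl Nat.iter. rewrite H_F, IHd, S_INR. ring.
Qed.

Lemma H_cont x : continuity_pt (Hf F rho) x.
Proof.
  unfold continuity_pt, continue_in, limit1_in, limit_in. simpl. unfold R_dist.
  intros eps He.
  destruct (dense rho Hi (Hf F rho x - eps) eps He) as [n1 [m1 [a1 a2]]].
  destruct (dense rho Hi (Hf F rho x) eps He) as [n2 [m2 [b1 b2]]].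
  set (a := Nat.iter n1 F 0 + IZR m1). set (b := Nat.iter n2 F 0 + IZR m2).
  assert (ha : a < x).
  { destruct (Rlt_or_le a x) as [h|h]; auto. exfalso.
    assert (Hf F rho x <= INR n1 * rho + IZR m1); [|lra].
    apply H2. intros n m h'. apply (order_A F rho HF Hl Hi). unfold a in h. lra. }
  assert (hb : x < b).
  { destruct (Rlt_or_le x b) as [h|h]; auto. exfalso. pose proof (H1 x n2 m2 h). lra. }
  exists (Rmin (x - a) (b - x)). split. apply Rmin_pos; lra.
  intros y [_ hy]. pose proof (Rmin_l (x - a) (b - x)). pose proof (Rmin_r (x - a) (b - x)).
  apply Rabs_def2 in hy. destruct hy.
  assert (Hya : INR n1 * rho + IZR m1 <= Hf F rho y).
  { apply Rle_trans with (Hf F rho a). apply H1. unfold a; lra. apply H_mono. lra. }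
  assert (Hyb : Hf F rho y <= INR n2 * rho + IZR m2).
  { apply Rle_trans with (Hf F rho b). apply H_mono. lra.
    apply H2. intros n m h'. apply (order_A F rho HF Hl Hi). unfold b in h'. lra. }
  apply Rabs_def1; lra.
Qed.

End Conj.

Definition wandering (F : R -> R) (x y : R) : Prop :=
  forall d u j1 j2, (1 <= d)%nat -> x <= u + IZR j1 <= y -> x <= Nat.iter d F u + IZR j2 <= y -> False.

Lemma exists_wandering F (rho : R) : op_circle_homeo_lift F ->
  is_lim_seq (fun n => Nat.iter n F 0 / INR n) rho -> irr rho -> ~ conj_to_rotation F ->
  exists x y, x < y /\ wandering F x y.
Proof.
  intros HF Hl Hi Hnc.
  destruct (classic (forall x y, x < y -> Hf F rho x < Hf F rho y)) as [Hinj|Hninj].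
  - exfalso. apply Hnc. exists (Hf F rho), rho. split.
    + split. intro x; apply (H_cont F rho HF Hl Hi). left. split. exact Hinj.
      intro x. pose proof (H_shift F rho HF Hl Hi x 1). simpl in H. exact H.
    + intro x. exists 0%Z. rewrite (H_F F rho HF Hl Hi). simpl. ring.
  - apply not_all_ex_not in Hninj. destruct Hninj as [x Hx].
    apply not_all_ex_not in Hx. destruct Hx as [y Hy].
    apply imply_to_and in Hy. destruct Hy as [hxy hH].
    assert (Heq : Hf F rho x = Hf F rho y).
    { pose proof (H_mono F rho HF Hl Hi x y ltac:(lra)). lra. }
    assert (Hc : forall z, x <= z <= y -> Hf F rho z = Hf F rho x).
    { intros z [h1 h2]. pose proof (H_mono F rho HF Hl Hi x z h1). pose proof (H_mono F rho HF Hl Hi z y h2). lra. }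
    exists x, y. split; auto. intros d u j1 j2 hd hu hv.
    pose proof (Hc _ hu) as e1. pose proof (Hc _ hv) as e2.
    rewrite (H_shift F rho HF Hl Hi) in e1, e2. rewrite (H_iter F rho HF Hl Hi) in e2.
    apply (irr_lin rho Hi d (j1 - j2) hd). rewrite minus_IZR. lra.
Qed.

Lemma dn_lt_inv F n x c eps : dn F n x c < eps ->
  forall k, (k < n)%nat -> dT (Nat.iter k F x) (Nat.iter k F c) < eps.
Proof.
  induction n; intros H k hk. lia. simpl in H. apply Rmax_Rlt in H. destruct H.
  destruct (Nat.eq_dec k n). subst; auto. apply IHn; auto. lia.
Qed.

Lemma dn_lt F n x c eps : 0 < eps ->
  (forall k, (k < n)%nat -> dT (Nat.iter k F x) (Nat.iter k F c) < eps) -> dn F n x c < eps.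
Proof.
  induction n; intros He H. simpl; auto. simpl. apply Rmax_Rlt. split.
  apply IHn; auto. apply H; lia.
Qed.

Lemma cover_lower F x y eps n N : op_circle_homeo_lift F -> wandering F x y -> 0 < eps ->
  2 * eps <= y - x -> covers F n eps N -> (n <= N)%nat.
Proof.
  intros HF Hw He Hxy [l [Hlen Hcov]].
  set (w := (x + y) / 2).
  set (P := fun k c => In c l /\ dT w (Nat.iter k F c) < eps).
  set (cf := fun k => epsilon (inhabits 0) (P k)).
  assert (Hcf : forall k, (k < n)%nat -> P k (cf k)).
  { intros k hk. apply epsilon_spec. destruct (iter_surj F HF k w) as [p Hp].
    destruct (Hcov p) as [c [hc1 hc2]]. exists c. split; auto.
    rewrite <- Hp. now apply (dn_lt_inv F n p c eps hc2). }
  assert (Hloc : forall a b c, (a < b < n)%nat -> P a c -> P b c -> False).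
  { intros a b c hab [_ ha] [_ hb].
    destruct (dT_lt_inv _ _ _ ha) as [j1 h1]. destruct (dT_lt_inv _ _ _ hb) as [j2 h2].
    apply Rabs_def2 in h1. apply Rabs_def2 in h2.
    apply (Hw (b - a)%nat (Nat.iter a F c) j1 j2). lia.
    - unfold w in *. lra.
    - rewrite <- Nat.iter_add. replace (b - a + a)%nat with b by lia.
      unfold w in *. lra. }
  rewrite <- Hlen. rewrite <- (length_seq n 0). rewrite <- (length_map cf).
  apply NoDup_incl_length.
  - apply NoDup_map_NoDup_ForallPairs. 2: apply seq_NoDup.
    intros a b ha hb e. apply in_seq in ha. apply in_seq in hb.
    destruct (Nat.lt_total a b) as [h|[h|h]]; auto; exfalso.
    + apply (Hloc a b (cf a)). lia. apply Hcf; lia. rewrite e. apply Hcf; lia.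
    + apply (Hloc b a (cf a)). lia. rewrite e. apply Hcf; lia. apply Hcf; lia.
  - intros c hc. apply in_map_iff in hc. destruct hc as [k [<- hk]]. apply in_seq in hk.
    apply Hcf. lia.
Qed.

Definition itin (F : R -> R) (K k : nat) (x : R) : Z := Int_part (INR K * Nat.iter k F x).

Fixpoint Ssum (F : R -> R) (K n : nat) (x : R) : Z :=
  match n with O => 0%Z | S m => (Ssum F K m x + itin F K m x)%Z end.

Section Up.
Variable F : R -> R.
Hypothesis HF : op_circle_homeo_lift F.
Variable K : nat.

Lemma itin_mono k x y : x <= y -> (itin F K k x <= itin F K k y)%Z.
Proof.
  intros h. unfold itin. apply Int_part_mono. apply Rmult_le_compat_l. apply pos_INR.
  now apply iter_le.
Qed.

Lemma itin_bound k x : 0 <= x < 1 -> (itin F K k x <= itin F K k 0 + Z.of_nat K)%Z.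
Proof.
  intros h. unfold itin. rewrite <- Int_part_shift.
  apply Int_part_mono. rewrite <- INR_IZR_INZ.
  pose proof (iter_le F HF k x (0 + IZR 1) ltac:(simpl; lra)). rewrite iter_shift in H by auto.
  simpl in H. pose proof (pos_INR K). nra.
Qed.

Lemma Ssum_mono n x y : x <= y -> (Ssum F K n x <= Ssum F K n y)%Z.
Proof. intros h. induction n; simpl. lia. pose proof (itin_mono n x y h). lia. Qed.

Lemma Ssum_bound n x : 0 <= x < 1 ->
  (Ssum F K n 0 <= Ssum F K n x <= Ssum F K n 0 + Z.of_nat (n * K))%Z.
Proof.
  intros h. induction n; simpl. lia.
  pose proof (itin_bound n x h). pose proof (itin_mono n 0 x ltac:(lra)). lia.
Qed.

Lemma Ssum_eq n x y : x <= y -> Ssum F K n x = Ssum F K n y ->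
  forall k, (k < n)%nat -> itin F K k x = itin F K k y.
Proof.
  intros h. induction n; intros e k hk. lia. simpl in e.
  pose proof (Ssum_mono n x y h). pose proof (itin_mono n x y h).
  destruct (Nat.eq_dec k n). subst; lia. apply IHn. lia. lia.
Qed.

Lemma itin_close k x c : (1 <= K)%nat -> itin F K k x = itin F K k c ->
  Rabs (Nat.iter k F x - Nat.iter k F c) < / INR K.
Proof.
  intros hK e. unfold itin in e.
  pose proof (Int_part_bnd (INR K * Nat.iter k F x)). pose proof (Int_part_bnd (INR K * Nat.iter k F c)).
  rewrite e in H. assert (0 < INR K) by (apply lt_0_INR; lia).
  apply Rabs_def1.
  - apply Rmult_lt_reg_l with (INR K); auto. rewrite Rinv_r by lra. lra.
  - apply Rmult_lt_reg_l with (INR K); auto. rewrite Ropp_mult_distr_r_reverse, Rinv_r by lra. lra.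
Qed.

Lemma dn_shift n x m c : dn F n (x + IZR m) c = dn F n x c.
Proof.
  induction n; simpl. auto. rewrite IHn, iter_shift, dT_shift by auto. auto.
Qed.

Definition rep (n : nat) (s : Z) : R :=
  epsilon (inhabits 0) (fun c => 0 <= c < 1 /\ Ssum F K n c = s).

Lemma cover_upper n eps : 0 < eps -> (1 <= K)%nat -> / INR K < eps -> covers F n eps (n * K + 1).
Proof.
  intros He hK hKe.
  exists (map (fun i => rep n (Ssum F K n 0 + Z.of_nat i)) (seq 0 (n * K + 1))).
  split. now rewrite length_map, length_seq.
  intros x. set (x' := x - IZR (Int_part x)). pose proof (Int_part_bnd x).
  assert (hx' : 0 <= x' < 1) by (unfold x'; lra).
  set (s := Ssum F K n x'). pose proof (Ssum_bound n x' hx') as hb. fold s in hb.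
  set (c := rep n s).
  assert (hc : 0 <= c < 1 /\ Ssum F K n c = s) by (unfold c, rep; apply epsilon_spec; exists x'; auto).
  exists c. split.
  - apply in_map_iff. exists (Z.to_nat (s - Ssum F K n 0)). split.
    + unfold c. f_equal. lia.
    + apply in_seq. lia.
  - replace x with (x' + IZR (Int_part x)) by (unfold x'; ring). rewrite dn_shift.
    apply dn_lt; auto. intros k hk.
    assert (itin F K k x' = itin F K k c).
    { destruct hc as [hc1 hc2]. destruct (Rle_or_lt x' c).
      - apply (Ssum_eq n); auto.
      - symmetry. apply (Ssum_eq n); auto. lra. }
    pose proof (itin_close k x' c hK H0). pose proof (dT_le_abs (Nat.iter k F x') (Nat.iter k F c)). lra.
Qed.

End Up.

Lemma min_exists (P : nat -> Prop) : (exists N, P N) -> exists N, P N /\ forall M, P M -> (N <= M)%nat.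
Proof.
  intros [N0 H0]. apply NNPP. intro Hn.
  assert (forall k N, (N <= k)%nat -> ~ P N).
  { induction k; intros N hN hP.
    - apply Hn. exists N. split; auto. intros; lia.
    - apply Hn. exists N. split; auto. intros M hM. destruct (le_lt_dec N M); auto.
      exfalso. apply (IHk M); auto. lia. }
  apply (H N0 N0); auto.
Qed.

Lemma Gn_spec F n eps : (exists N, covers F n eps N) ->
  covers F n eps (Gn F n eps) /\ forall M, covers F n eps M -> (Gn F n eps <= M)%nat.
Proof.
  intros h. unfold Gn. apply epsilon_spec. now apply min_exists.
Qed.

Lemma lim_ln : is_lim_seq (fun n => ln (INR n)) p_infty.
Proof. eapply filterlim_comp. apply is_lim_seq_INR. apply is_lim_ln_p. Qed.

Lemma lim_v c : is_lim_seq (fun n => 1 + c * / ln (INR n)) 1.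
Proof.
  replace (Finite 1) with (Finite (1 + c * 0)) by (f_equal; ring).
  apply is_lim_seq_plus'. apply is_lim_seq_const.
  pose proof (is_lim_seq_inv _ _ lim_ln ltac:(discriminate)). simpl in H.
  pose proof (is_lim_seq_scal_l _ c _ H). simpl in H0. exact H0.
Qed.

Lemma hpol_one F x y eps : op_circle_homeo_lift F -> wandering F x y -> 0 < eps -> 2 * eps <= y - x ->
  hpol_eps F eps = Finite 1.
Proof.
  intros HF Hw He Hxy.
  destruct (archimed_cor1 eps He) as [K [hK1 hK2]].
  assert (Hsp : forall n, (n <= Gn F n eps <= n * K + 1)%nat).
  { intros n. destruct (Gn_spec F n eps) as [G1 G2].
    exists (n * K + 1)%nat. apply cover_upper; auto.
    split. eapply cover_lower; eauto. apply G2. apply cover_upper; auto. }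
  unfold hpol_eps. apply is_LimSup_seq_unique. apply is_lim_LimSup_seq.
  apply is_lim_seq_le_le_loc with (u := fun _ => 1) (w := fun n => 1 + ln (INR K + 1) * / ln (INR n)).
  2: apply is_lim_seq_const. 2: apply lim_v.
  exists 2%nat. intros n hn. destruct (Hsp n) as [h1 h2].
  assert (hn1 : 1 < INR n) by (replace 1 with (INR 1) by reflexivity; apply lt_INR; lia).
  assert (hln : 0 < ln (INR n)) by (rewrite <- ln_1; apply ln_increasing; lra).
  apply le_INR in h1. apply le_INR in h2. rewrite plus_INR, mult_INR in h2. simpl in h2.
  assert (0 < INR K) by (apply lt_0_INR; lia).
  assert (lo : ln (INR n) <= ln (INR (Gn F n eps))) by (apply ln_le; lra).
  assert (hi : ln (INR (Gn F n eps)) <= ln (INR n) + ln (INR K + 1)).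
  { rewrite <- ln_mult by lra. apply ln_le. lra. nra. }
  split.
  - apply Rmult_le_reg_r with (ln (INR n)); auto. unfold Rdiv. rewrite Rmult_assoc, Rinv_l by lra. lra.
  - apply Rmult_le_reg_r with (ln (INR n)); auto. unfold Rdiv. rewrite Rmult_assoc, Rinv_l by lra.
    rewrite Rmult_plus_distr_r, Rmult_assoc, Rinv_l by lra. lra.
Qed.

Theorem proposition3p3 (F : R -> R) (rho : R) :
  op_circle_homeo_lift F ->
  is_lim_seq (fun n => Nat.iter n F 0 / INR n) rho ->
  (~ exists p q : Z, q <> 0%Z /\ rho = IZR p / IZR q) ->
  ~ conj_to_rotation F ->
  hpol_eq F 1.
Proof.
  intros HF Hl Hirr Hnc.
  destruct (exists_wandering F rho HF Hl Hirr Hnc) as [x [y [hxy Hw]]].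
  intros delta hd. exists ((y - x) / 2). split. lra.
  intros eps [e1 e2]. exists 1. split.
  - apply (hpol_one F x y); auto; lra.
  - rewrite Rminus_diag, Rabs_R0. exact hd.
Qed.
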